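(* Let $\sigma\in\mathrm{Spin}(\Sigma_g)$. The assignment $\overline{C}\mapsto(-1)^{q_\sigma(C)}i_C$ extends to a well-defined homomorphism of unital $\mathbb{Z}/8$-algebras $\Phi:W_\sigma\to\mathrm{Map}(H_1(\Sigma_g;\mathbb{Z}/2),\mathbb{Z}/8)$.
   Context: $\Sigma_g$ is a closed oriented genus $g$ surface; $\cdot$ is the mod 2 intersection form on $H_1(\Sigma_g;\mathbb{Z}/2)$. To $\sigma\in\mathrm{Spin}(\Sigma_g)$ is associated (Johnson) a quadratic form $q_\sigma:H_1(\Sigma_g;\mathbb{Z}/2)\to\mathbb{Z}/2$, $q_\sigma(y+z)=q_\sigma(y)+q_\sigma(z)+y\cdot z$. For $z\in H_1(\Sigma_g;\mathbb{Z}/2)$, $i_z(y)=1\in\mathbb{Z}/8$ if $z\cdot y\equiv1\pmod2$ and $0$ otherwise. $\mathrm{Map}(H_1(\Sigma_g;\mathbb{Z}/2),\mathbb{Z}/8)$ is a $\mathbb{Z}/8$-algebra under pointwise operations. $W_\sigma$ is the unital associative commutative $\mathbb{Z}/8$-algebra generated by symbols $\overline{C}$, $C\in H_1(\Sigma_g;\mathbb{Z}/2)$, subject to: (i) $\overline{C_1+C_2}=(-1)^{C_1\cdot C_2}\big((-1)^{q_\sigma(C_2)}\overline{C_1}+(-1)^{q_\sigma(C_1)}\overline{C_2}-2\overline{C_1}\,\overline{C_2}\big)$ for all $C_1\ne C_2$; (ii) $\overline{C}^2=(-1)^{q_\sigma(C)}\overline{C}$ for all $C$. *)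

(* Defs.v *)
From HB Require Import structures.
From mathcomp Require Import all_boot all_order all_algebra.
From mathcomp Require Import mpoly.
Set Implicit Arguments. Unset Strict Implicit. Unset Printing Implicit Defensive.
Import GRing.Theory.
Local Open Scope ring_scope.

(* H_1(Sigma_g; Z/2) modelled as (Z/2)^(2g) with symplectic basis
   a_1..a_g (first g coordinates), b_1..b_g (last g coordinates). *)
Definition H1 (g : nat) := 'rV['F_2]_(g + g).

Definition ipair (g : nat) (x y : H1 g) : 'F_2 :=
  (lsubmx x *m (rsubmx y)^T + rsubmx x *m (lsubmx y)^T) 0 0.

Definition is_quadratic_refinement (g : nat) (q : H1 g -> 'F_2) : Prop :=
  forall y z : H1 g, q (y + z) = q y + q z + ipair y z.

Definition sgn8 (b : 'F_2) : 'Z_8 := if b == 0 then 1 else -1.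

Definition ind (g : nat) (z : H1 g) : {ffun H1 g -> 'Z_8} :=
  [ffun y => if ipair z y == 1 then 1 else 0].

(* The free unital commutative Z/8-algebra on symbols \bar C, C in H1 g:
   polynomial ring with one variable per element of H1 g. *)
Definition FreeW (g : nat) := {mpoly 'Z_8[#|{: H1 g}|]}.

Definition gen (g : nat) (C : H1 g) : FreeW g := 'X_(enum_rank C).

(* The defining relators of W_sigma (relation r holds iff relator = 0). *)
Definition relator1 (g : nat) (q : H1 g -> 'F_2) (C1 C2 : H1 g) : FreeW g :=
  gen (C1 + C2) -
  (sgn8 (ipair C1 C2)) *: ((sgn8 (q C2)) *: gen C1 + (sgn8 (q C1)) *: gen C2
                            - 2%:R *: (gen C1 * gen C2)).

Definition relator2 (g : nat) (q : H1 g -> 'F_2) (C : H1 g) : FreeW g :=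
  gen C ^+ 2 - (sgn8 (q C)) *: gen C.

Definition is_relator (g : nat) (q : H1 g -> 'F_2) (r : FreeW g) : Prop :=
  (exists C1 C2 : H1 g, C1 != C2 /\ r = relator1 q C1 C2)
  \/ (exists C : H1 g, r = relator2 q C).

(* The ideal generated by the relators; W_sigma = FreeW g / relIdeal q. *)
Definition in_relIdeal (g : nat) (q : H1 g -> 'F_2) (p : FreeW g) : Prop :=
  exists (s : seq (FreeW g * FreeW g)),
    (forall ar, ar \in s -> is_relator q ar.2) /\
    p = \sum_(ar <- s) ar.1 * ar.2.

(* Main.v *)
Require Import Defs.
From HB Require Import structures.
From mathcomp Require Import all_boot all_order all_algebra.
From mathcomp Require Import mpoly.
Import GRing.Theory.
Local Open Scope ring_scope.

Definition b8 (x : 'F_2) : 'Z_8 := if x == 1 then 1 else 0.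

Lemma key (a b e q1 q2 : 'F_2) :
  sgn8 (q1 + q2 + e) * b8 (a + b) =
  sgn8 e * (sgn8 q2 * (sgn8 q1 * b8 a) + sgn8 q1 * (sgn8 q2 * b8 b)
    - 2%:R * ((sgn8 q1 * b8 a) * (sgn8 q2 * b8 b))).
Proof.
by case: a => [[|[|//]]] ?; case: b => [[|[|//]]] ?; case: e => [[|[|//]]] ?;
   case: q1 => [[|[|//]]] ?; case: q2 => [[|[|//]]] ?; apply/eqP.
Qed.

Lemma key2 (a q1 : 'F_2) :
  (sgn8 q1 * b8 a) ^+ 2 = sgn8 q1 * (sgn8 q1 * b8 a).
Proof.
by case: a => [[|[|//]]] ?; case: q1 => [[|[|//]]] ?; apply/eqP.
Qed.

Lemma ipairDl g (x z y : H1 g) : ipair (x + z) y = ipair x y + ipair z y.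
Proof.
rewrite /ipair !linearD /= !mulmxDl !mxE.
by rewrite addrACA.
Qed.

Theorem proposition6p2 (g : nat) (q : H1 g -> 'F_2) :
  is_quadratic_refinement q ->
  exists Phi : FreeW g -> {ffun H1 g -> 'Z_8},
    [/\ Phi 1 = 1 /\
        (forall p p' : FreeW g, Phi (p + p') = Phi p + Phi p'),
        (forall p p' : FreeW g, Phi (p * p') = Phi p * Phi p'),
        (forall (c : 'Z_8) (p : FreeW g) (y : H1 g), Phi (c *: p) y = c * Phi p y),
        (forall C : H1 g, Phi (gen C) = [ffun y => sgn8 (q C) * ind C y])
      & (forall p : FreeW g, in_relIdeal q p -> Phi p = 0)].
Proof.
move=> hq.
pose v (y : H1 g) (i : 'I_#|{: H1 g}|) : 'Z_8 :=
  sgn8 (q (enum_val i)) * b8 (ipair (enum_val i) y).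
pose Phi (p : FreeW g) : {ffun H1 g -> 'Z_8} := [ffun y => p.@[v y]].
have PhiD p p' : Phi (p + p') = Phi p + Phi p'.
  by apply/ffunP => y; rewrite !ffunE mevalD.
have PhiM p p' : Phi (p * p') = Phi p * Phi p'.
  by apply/ffunP => y; rewrite !ffunE mevalM.
have PhiZ c p y : Phi (c *: p) y = c * Phi p y by rewrite !ffunE mevalZ.
have PhiG C y : Phi (gen C) y = sgn8 (q C) * b8 (ipair C y).
  by rewrite ffunE /gen mevalXU /v enum_rankK.
exists Phi; split.
- split=> //; apply/ffunP => y; rewrite !ffunE meval1.
  by [].
- exact: PhiM.
- exact: PhiZ.
- by move=> C; apply/ffunP => y; rewrite PhiG !ffunE.
move=> p [s [hs ->]].
have EG C y : (gen C).@[v y] = sgn8 (q C) * b8 (ipair C y).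
  by rewrite /gen mevalXU /v enum_rankK.
have rel0 r : is_relator q r -> forall y, Phi r y = 0.
  case=> [[C1 [C2 [_ ->]]]|[C ->]] y; rewrite /relator1 /relator2 ffunE.
    rewrite mevalB mevalZ mevalB mevalD !mevalZ mevalM !EG.
    rewrite hq ipairDl key.
    have -> : (2%:R : 'Z_8) = 2%:R by [].
    by rewrite subrr.
  by rewrite mevalB mevalZ !expr2 mevalM EG -expr2 key2 subrr.
have : forall ar, ar \in s -> forall y, Phi (ar.1 * ar.2) y = 0.
  by move=> ar /hs hr y; rewrite PhiM ffunE (rel0 _ hr) mulr0.
elim: s {hs} => [|a s IH] h.
  by rewrite big_nil; apply/ffunP => y; rewrite !ffunE meval0.
rewrite big_cons PhiD IH; last by move=> ar har; apply: h; rewrite inE har orbT.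
rewrite addr0; apply/ffunP => y; rewrite (h a (mem_head _ _)) ffunE.
by [].
Qed.
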